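(* The BSDE is stabilizable if and only if $S_0\subset\mathcal C$, where $S_0:=\{y\in\mathbb R^d: Ay=0\}$. Consequently: (i) if $\mathbb S$ consists of a single ergodic class ($m=1$), then the BSDE is stabilizable; (ii) if $\mathbb S=\bigcup_{k=1}^m\mathbb S_k$ is the partition into ergodic classes, then the BSDE is stabilizable if and only if $\mathsf 1_{\mathbb S_k}\in\mathcal C$ for all $k=1,\dots,m$.
   Context: Let $\mathbb S=\{1,\dots,d\}$. Functions on $\mathbb S$ are identified with vectors in $\mathbb R^d$; $\mathsf 1$ is the all-ones vector, $\mathsf 1_D$ the indicator of $D\subset\mathbb S$, and $gh$ the entrywise product. $A$ is the rate matrix of a continuous-time Markov chain on $\mathbb S$ (off-diagonal entries nonnegative, rows summing to zero). $\mathbb S=\bigcup_{k=1}^m\mathbb S_k$ is its partition into ergodic classes, each a closed irreducible class. $h\in\mathbb R^d$ is the observation function of the model $Z_t=\int_0^th(X_s)\,\mathrm ds+W_t$. The BSDE is $$-\mathrm dY_t=(AY_t+hU_t+hV_t)\,\mathrm dt-V_t\,\mathrm dZ_t$$ with admissible (observation-adapted, square-integrable) controls $U$. Its controllable subspace $\mathcal C$ is the set of $Y_0$ reachable from some deterministic terminal condition $Y_T=c\mathsf 1$ using some admissible control. Equivalently (by a known result), $\mathcal C$ is the smallest subspace of $\mathbb R^d$ containing $\mathsf 1$ and closed under $g\mapsto Ag$ and $g\mapsto gh$. Since $\mathcal C$ is $A$-invariant, $A$ induces a map $\bar A_{uc}$ on $\mathbb R^d/\mathcal C$; in an orthonormal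 basis adapted to $\mathcal C\oplus\mathcal C^\perp$, $A$ is block upper triangular and $\bar A_{uc}$ is its lower-right block. The BSDE is stabilizable if either $\mathcal C=\mathbb R^d$, or $\mathcal C\ne\mathbb R^d$ and $\bar A_{uc}$ is Hurwitz. *)

(* Defs.v *)
(* Functions on S = {1..d} are column vectors 'cV[R]_d,
   the scalar field is an arbitrary real closed field R (e.g. the reals). *)
From HB Require Import structures.
From mathcomp Require Import all_boot all_order all_algebra.
From mathcomp Require Import complex.
Set Implicit Arguments. Unset Strict Implicit. Unset Printing Implicit Defensive.
Import Order.TTheory GRing.Theory Num.Theory.
Local Open Scope ring_scope.

Section Defs.
Variable R : rcfType.

Definition ones (d : nat) : 'cV[R]_d := const_mx 1.

Definition indic (d : nat) (D : {set 'I_d}) : 'cV[R]_d :=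
  \col_i (if i \in D then 1 else 0).

Definition hprod (d : nat) (g h : 'cV[R]_d) : 'cV[R]_d :=
  \col_i (g i 0 * h i 0).

(* membership of a vector in the subspace given by the row space of V *)
Definition inV (d : nat) (V : 'M[R]_d) (g : 'cV[R]_d) : bool := (g^T <= V)%MS.

Definition rate_matrix (d : nat) (A : 'M[R]_d) : Prop :=
  (forall i j : 'I_d, i != j -> 0 <= A i j) /\
  (forall i : 'I_d, \sum_(j < d) A i j = 0).

Definition trans (d : nat) (A : 'M[R]_d) : rel 'I_d :=
  fun i j => (i != j) && (0 < A i j).

Definition ergodic_partition (d : nat) (A : 'M[R]_d) (m : nat)
    (S : 'I_m -> {set 'I_d}) : Prop :=
  (forall k, S k != set0) /\
  (forall i : 'I_d, exists k, i \in S k) /\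
  (forall k l (i : 'I_d), i \in S k -> i \in S l -> k = l) /\
  (forall k (i j : 'I_d), i \in S k -> trans A i j -> j \in S k) /\
  (forall k (i j : 'I_d), i \in S k -> j \in S k -> connect (trans A) i j).

Definition inC (d : nat) (A : 'M[R]_d) (h g : 'cV[R]_d) : Prop :=
  forall V : 'M[R]_d,
    inV V (ones d) ->
    (forall f, inV V f -> inV V (A *m f)) ->
    (forall f, inV V f -> inV V (hprod f h)) ->
    inV V g.

Definition hurwitz (s : nat) (B : 'M[R]_s) : Prop :=
  forall z : R[i],
    root (map_poly (fun x : R => (x%:C)%C) (char_poly B)) z -> Re z < 0.

(* the BSDE is stabilizable: either C = R^d, or C <> R^d and the map
   induced by A on R^d / C is Hurwitz; the latter is the lower-right block
   of A written in an orthonormal basis P = [P1 P2] with P1 a basis of C *)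
Definition stabilizable (d : nat) (A : 'M[R]_d) (h : 'cV[R]_d) : Prop :=
  (forall g : 'cV[R]_d, inC A h g) \/
  (~ (forall g : 'cV[R]_d, inC A h g) /\
   exists (r s : nat) (P : 'M[R]_(d, r + s)),
     (r + s)%N = d /\
     P^T *m P = 1%:M /\
     (forall g : 'cV[R]_d, inC A h g <-> exists x : 'cV[R]_r, g = lsubmx P *m x) /\
     hurwitz (drsubmx (P^T *m A *m P))).

End Defs.

(* Main.v *)
Require Import Defs.
From HB Require Import structures.
From mathcomp Require Import all_boot all_order all_algebra.
From mathcomp Require Import complex.
From mathcomp Require Import zify lra.
From Stdlib Require Import Classical.
Import Order.TTheory GRing.Theory Num.Theory.
Local Open Scope ring_scope.
Set Implicit Arguments. Unset Strict Implicit. Unset Printing Implicit Defensive.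

Section Closure.
Variable R : rcfType.
Variable d : nat.
Variable A : 'M[R]_d.
Variable h : 'cV[R]_d.

Lemma inC_ones : inC A h (ones R d).
Proof. by move=> V. Qed.

Lemma inC_A g : inC A h g -> inC A h (A *m g).
Proof. by move=> Hg V H1 HA HH; apply: (HA); exact: (Hg V H1 HA HH). Qed.

Lemma inC_h g : inC A h g -> inC A h (hprod g h).
Proof. by move=> Hg V H1 HA HH; apply: (HH); exact: (Hg V H1 HA HH). Qed.

Lemma inC_add f g : inC A h f -> inC A h g -> inC A h (f + g).
Proof.
move=> Hf Hg V H1 HA HH; rewrite /inV linearD /=.
by apply: addmx_sub; [apply: Hf | apply: Hg].
Qed.

Lemma inC_scale (a : R) g : inC A h g -> inC A h (a *: g).
Proof.
move=> Hg V H1 HA HH; rewrite /inV linearZ /=.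
by apply: scalemx_sub; apply: Hg.
Qed.

Lemma inC_0 : inC A h 0.
Proof. by move=> V _ _ _; rewrite /inV trmx0 sub0mx. Qed.

Lemma inC_opp g : inC A h g -> inC A h (- g).
Proof. by move=> Hg; rewrite -scaleN1r; apply: inC_scale. Qed.

Lemma inC_sub f g : inC A h f -> inC A h g -> inC A h (f - g).
Proof. by move=> Hf Hg; apply: inC_add => //; apply: inC_opp. Qed.

Lemma inC_sum (I : finType) (F : I -> 'cV[R]_d) (P : pred I) :
  (forall i, P i -> inC A h (F i)) -> inC A h (\sum_(i | P i) F i).
Proof.
move=> HF; apply: (big_ind (inC A h)) => //; first exact: inC_0.
exact: inC_add.
Qed.

Definition stepC (V : 'M[R]_d) : 'M[R]_d :=
  (V + V *m A^T + V *m diag_mx h^T)%MS.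

Definition V0 : 'M[R]_d := <<(ones R d)^T>>%MS.

Definition Cmx : 'M[R]_d := iter d.+1 stepC V0.

Lemma stepC_ge V : (V <= stepC V)%MS.
Proof. by rewrite /stepC -addsmxA addsmxSl. Qed.

Lemma stepC_mono V W : (V <= W)%MS -> (stepC V <= stepC W)%MS.
Proof.
move=> VW; rewrite /stepC; apply: addsmxS; first apply: addsmxS => //.
  exact: submxMr.
exact: submxMr.
Qed.

Lemma hprod_tr g : (hprod g h)^T = g^T *m diag_mx h^T.
Proof.
apply/matrixP => i j; rewrite (ord1 i) !mxE (bigD1 j) //= big1 ?addr0.
  by rewrite !mxE eqxx mulr1n.
by move=> k /negbTE nkj; rewrite !mxE nkj mulr0n mulr0.
Qed.

Lemma closed_stepC V : inV V (ones R d) ->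
    (forall f, inV V f -> inV V (A *m f)) ->
    (forall f, inV V f -> inV V (hprod f h)) ->
  forall W, (W <= V)%MS -> (stepC W <= V)%MS.
Proof.
move=> H1 HA HH W WV; rewrite /stepC !addsmx_sub WV /=; apply/andP; split.
  apply: submx_trans (submxMr _ WV) _.
  apply/row_subP => i; rewrite row_mul.
  have := HA (row i V)^T; rewrite /inV trmx_mul !trmxK; apply.
  exact: row_sub.
apply: submx_trans (submxMr _ WV) _.
apply/row_subP => i; rewrite row_mul.
have := HH (row i V)^T; rewrite /inV hprod_tr !trmxK; apply.
exact: row_sub.
Qed.

Lemma iter_le_closed V : inV V (ones R d) ->
    (forall f, inV V f -> inV V (A *m f)) ->
    (forall f, inV V f -> inV V (hprod f h)) ->
  forall k, (iter k stepC V0 <= V)%MS.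
Proof.
move=> H1 HA HH; elim=> [|k IH] /=.
  by rewrite /V0 genmxE.
exact: closed_stepC.
Qed.

Lemma iter_fix k : (stepC (iter k stepC V0) <= iter k stepC V0)%MS \/
                   (k <= \rank (iter k stepC V0))%N.
Proof.
elim: k => [|k [IH|IH]]; first by right.
  left => /=; exact: stepC_mono.
have [Hc|Hc] := boolP (stepC (iter k stepC V0) <= iter k stepC V0)%MS.
  left => /=; exact: stepC_mono.
right => /=.
have lt : (iter k stepC V0 < stepC (iter k stepC V0))%MS.
  by rewrite ltmxE stepC_ge Hc.
exact: leq_trans (rank_ltmx lt).
Qed.

Lemma Cmx_closed : (stepC Cmx <= Cmx)%MS.
Proof.
have [//|] := iter_fix d.+1.
by rewrite ltnNge rank_leq_col.
Qed.

Lemma V0_Cmx k : (V0 <= iter k stepC V0)%MS.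
Proof.
elim: k => //= k IH; apply: submx_trans IH _; exact: stepC_ge.
Qed.

Lemma Cmx_A : (Cmx *m A^T <= Cmx)%MS.
Proof. by have := Cmx_closed; rewrite /stepC !addsmx_sub => /andP[/andP[_ ->]]. Qed.

Lemma Cmx_h : (Cmx *m diag_mx h^T <= Cmx)%MS.
Proof. by have := Cmx_closed; rewrite /stepC !addsmx_sub => /andP[_ ->]. Qed.

Lemma inCP g : inC A h g <-> inV Cmx g.
Proof.
split.
  move=> Hg; apply: Hg.
  - by rewrite /inV -(genmxE (ones R d)^T); apply: V0_Cmx.
  - move=> f; rewrite /inV => Hf; rewrite trmx_mul.
    exact: submx_trans (submxMr _ Hf) Cmx_A.
  - move=> f; rewrite /inV => Hf; rewrite hprod_tr.
    exact: submx_trans (submxMr _ Hf) Cmx_h.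
move=> Hg V H1 HA HH; apply: submx_trans Hg _.
exact: iter_le_closed.
Qed.

End Closure.

Section Markov.
Variable R : rcfType.
Variable d : nat.
Variable A : 'M[R]_d.
Variable m : nat.
Variable S : 'I_m -> {set 'I_d}.
Hypothesis rateA : rate_matrix A.
Hypothesis ergS : ergodic_partition A S.

Lemma Af_expand (f : 'cV[R]_d) i :
  (A *m f) i 0 = \sum_j A i j * (f j 0 - f i 0).
Proof.
rewrite mxE; under [RHS]eq_bigr do rewrite mulrBr.
rewrite sumrB -mulr_suml (proj2 rateA) mul0r subr0.
by [].
Qed.

Lemma closed_zero k i j : i \in S k -> j \notin S k -> A i j = 0.
Proof.
move=> Hi Hj; have nij : i != j by apply: contraNneq Hj => <-.
have := (proj1 rateA) i j nij; rewrite le_eqVlt => /orP[/eqP <- //|lt].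
case: ergS => _ [_ [_ [Hcl _]]].
by move: Hj; rewrite (Hcl k i j Hi) //= /trans nij lt.
Qed.

Lemma max_step k (f : 'cV[R]_d) x y :
  x \in S k -> (forall j, j \in S k -> f j 0 <= f x 0) ->
  0 <= (A *m f) x 0 -> trans A x y -> y \in S k /\ f y 0 = f x 0.
Proof.
move=> Hx Hmax H0 Hxy.
case: ergS => _ [_ [_ [Hcl _]]].
have Hy := Hcl k x y Hx Hxy; split => //.
have tle : forall j, A x j * (f j 0 - f x 0) <= 0.
  move=> j; have [->|nxj] := eqVneq x j; first by rewrite subrr mulr0.
  have [Hj|Hj] := boolP (j \in S k).
    rewrite mulr_ge0_le0 //; first exact: (proj1 rateA).
    by rewrite subr_le0 Hmax.
  by rewrite (closed_zero Hx Hj) mul0r.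
have Hs : \sum_j - (A x j * (f j 0 - f x 0)) = 0.
  apply/eqP; rewrite eq_le sumr_ge0 ?andbT; last by move=> j _; rewrite oppr_ge0.
  by rewrite sumrN oppr_le0 -Af_expand.
have tge : forall j, true -> 0 <= - (A x j * (f j 0 - f x 0)).
  by move=> j _; rewrite oppr_ge0 tle.
have := psumr_eq0P tge Hs (i:=y) isT.
move/eqP; rewrite oppr_eq0 mulf_eq0 => /orP[|].
  by move: Hxy; rewrite /trans => /andP[_ /lt0r_neq0 /negbTE ->].
by rewrite subr_eq0 => /eqP.
Qed.

Lemma max_principle k (f : 'cV[R]_d) :
  (forall i, i \in S k -> 0 <= (A *m f) i 0) ->
  forall i j, i \in S k -> j \in S k -> f i 0 = f j 0.
Proof.
move=> Hpos.
case: ergS => Hne [_ [_ [Hcl Hconn]]].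
have /set0Pn [i0 Hi0] := Hne k.
pose im := [arg max_(x > i0 in S k) f x 0]%O.
have [Him Hmax] : im \in S k /\ forall j, j \in S k -> f j 0 <= f im 0.
  by rewrite /im; case: arg_maxP => // x Hx Hm; split => // j /Hm.
have claim : forall p x, x \in S k -> f x 0 = f im 0 -> path (trans A) x p ->
    last x p \in S k /\ f (last x p) 0 = f im 0.
  elim=> [|y p IH] x Hx Hfx //= /andP[Hxy Hp].
  have Hmx : forall j, j \in S k -> f j 0 <= f x 0 by move=> j /Hmax; rewrite Hfx.
  have [Hy Hfy] := max_step Hx Hmx (Hpos x Hx) Hxy.
  by apply: IH => //; rewrite Hfy.
have all_eq : forall j, j \in S k -> f j 0 = f im 0.
  move=> j Hj; have /connectP [p Hp ->] := Hconn k im j Him Hj.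
  by have [] := claim p im Him erefl Hp.
by move=> i j Hi Hj; rewrite !all_eq.
Qed.

Lemma const_class_zero k (f : 'cV[R]_d) i : i \in S k ->
  (forall j, j \in S k -> f j 0 = f i 0) -> (A *m f) i 0 = 0.
Proof.
move=> Hi Hc; rewrite Af_expand big1 // => j _.
have [Hj|Hj] := boolP (j \in S k); first by rewrite Hc // subrr mulr0.
by rewrite (closed_zero Hi Hj) mul0r.
Qed.

Lemma class_of i : exists k, i \in S k.
Proof. by case: ergS => _ [H _]; apply: H. Qed.

Lemma class_uniq k l i : i \in S k -> i \in S l -> k = l.
Proof. by case: ergS => _ [_ [H _]]; apply: H. Qed.

Lemma ker_const (f : 'cV[R]_d) : A *m f = 0 ->
  forall k i j, i \in S k -> j \in S k -> f i 0 = f j 0.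
Proof.
move=> Hf k; apply: max_principle => i _; by rewrite Hf mxE.
Qed.

Lemma index1 (x : 'cV[R]_d) : A *m (A *m x) = 0 -> A *m x = 0.
Proof.
move=> H2; apply/matrixP => i jj; rewrite (ord1 jj) [RHS]mxE.
have [k Hi] := class_of i.
have Hw := ker_const H2 Hi.
have [Hle|Hlt] := lerP 0 ((A *m x) i 0).
  apply: (const_class_zero Hi) => j Hj; apply/esym.
  apply: (max_principle (k := k)) => // l Hl.
  by rewrite -(Hw l Hl).
apply: (const_class_zero Hi) => j Hj.
have Hneg : forall l, l \in S k -> 0 <= (A *m (- x)) l 0.
  move=> l Hl; rewrite mulmxN mxE oppr_ge0 -(Hw l Hl); exact: ltW.
have := max_principle Hneg Hj Hi.
by rewrite !mxE => /eqP; rewrite eqr_opp => /eqP.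
Qed.

Lemma indic_ker k : A *m indic R (S k) = 0.
Proof.
apply/matrixP => i jj; rewrite (ord1 jj) [RHS]mxE.
have [l Hi] := class_of i.
apply: (const_class_zero Hi) => j' Hj'; rewrite !mxE.
have [Hik|Hik] := boolP (i \in S k).
  by have := class_uniq Hi Hik => El; rewrite -El Hj'.
have [Hjk|//] := boolP (j' \in S k).
by move: Hik; rewrite -(class_uniq Hj' Hjk) Hi.
Qed.

Definition restr (y : 'cV[R]_d) k : 'cV[R]_d :=
  \col_i (if i \in S k then y i 0 else 0).

Lemma restr_sum (y : 'cV[R]_d) : y = \sum_k restr y k.
Proof.
apply/matrixP => i jj; rewrite (ord1 jj) summxE.
have [l Hi] := class_of i.
rewrite (bigD1 l) //= big1 ?addr0; first by rewrite mxE Hi.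
move=> k nkl; rewrite mxE; case: ifP => // Hk.
by move: nkl; rewrite (class_uniq Hi Hk) eqxx.
Qed.

Lemma restr_indic (y : 'cV[R]_d) k : A *m y = 0 ->
  exists c, restr y k = c *: indic R (S k).
Proof.
move=> Hy; case: ergS => Hne _.
have /set0Pn [j0 Hj0] := Hne k.
exists (y j0 0); apply/matrixP => i jj; rewrite (ord1 jj) !mxE.
case: ifP => Hi; last by rewrite mulr0.
by rewrite mulr1 (ker_const Hy Hi Hj0).
Qed.

End Markov.

Section Orth.
Variable R : rcfType.

Lemma rank_orth j n (W : 'M[R]_(j, n)) : W *m W^T = 1%:M -> \rank W = j.
Proof.
move=> HW; apply/eqP; rewrite eqn_leq rank_leq_row /=.
by have := mxrankM_maxl W W^T; rewrite HW mxrank1.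
Qed.

Lemma exists_unit_orth n p q (U : 'M[R]_(q, n)) (M : 'M[R]_(p, n)) :
  (\rank M < \rank U)%N ->
  exists v : 'rV[R]_n, (v <= U)%MS /\ M *m v^T = 0 /\ v *m v^T = 1%:M.
Proof.
move=> HMU.
pose K := kermx M^T.
pose X := (U :&: K)%MS.
have rX : (0 < \rank X)%N.
  have := mxrank_sum_cap U K; rewrite mxrank_ker mxrank_tr.
  have := rank_leq_col (U + K)%MS; have := rank_leq_col M.
  rewrite -/X; lia.
pose v0 := nz_row X.
have v0n0 : v0 != 0 by rewrite nz_row_eq0 -mxrank_eq0 -lt0n.
have v0X : (v0 <= X)%MS := nz_row_sub X.
have v0U : (v0 <= U)%MS by apply: submx_trans v0X (capmxSl _ _).
have v0K : v0 *m M^T = 0.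
  by apply/eqP; rewrite -sub_kermx; apply: submx_trans v0X (capmxSr _ _).
pose qq := (v0 *m v0^T) 0 0.
have qqE : qq = \sum_j v0 0 j ^+ 2.
  by rewrite /qq mxE; apply: eq_bigr => j _; rewrite mxE expr2.
have qq_gt0 : 0 < qq.
  rewrite qqE lt_def sumr_ge0 ?andbT; last by move=> j _; rewrite sqr_ge0.
  apply/negP => /eqP H0; move/negP: v0n0; apply; apply/eqP/rowP => j.
  have := psumr_eq0P (fun j _ => sqr_ge0 (v0 0 j)) H0 (i:=j) isT.
  by move/eqP; rewrite sqrf_eq0 mxE => /eqP.
pose c := Num.sqrt qq.
have c_gt0 : 0 < c by rewrite sqrtr_gt0.
exists (c^-1 *: v0); split; first by rewrite scalemx_sub.
split; first by rewrite linearZ /= -scalemxAr -(trmxK M) -trmx_mul v0K trmx0 scaler0.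
apply/matrixP => i i'; rewrite (ord1 i) (ord1 i') linearZ /= -scalemxAr -scalemxAl.
rewrite !mxE -/qq mulr1n mulrA -invfM -expr2 sqr_sqrtr ?ltW //.
have -> : \sum_j v0 0 j * v0^T j 0 = qq by rewrite /qq mxE.
by rewrite mulVf // gt_eqF.
Qed.

Lemma ext_orth n q k (U : 'M[R]_(q, n)) (W0 : 'M[R]_(k, n)) j :
  (\rank W0 + j <= \rank U)%N ->
  exists W : 'M[R]_(j, n),
    W *m W^T = 1%:M /\ W0 *m W^T = 0 /\ (W <= U)%MS.
Proof.
elim: j => [|j IH] Hr.
  exists 0; split; first by apply/matrixP => [[]].
  by split; [apply/matrixP => ? [] | rewrite sub0mx].
have Hr' : (\rank W0 + j <= \rank U)%N by rewrite addnS in Hr; exact: ltnW.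
have [W [HWW [HW0 HWU]]] := IH Hr'.
have rM : (\rank (col_mx W0 W) < \rank U)%N.
  rewrite -addsmxE; apply: leq_ltn_trans (mxrank_adds_leqif _ _) _.
  by rewrite (rank_orth HWW) -addnS.
have [v [HvU [Hv0 Hvv]]] := exists_unit_orth rM.
move: Hv0; rewrite mul_col_mx => /eqP; rewrite col_mx_eq0 => /andP[/eqP HW0v /eqP HWv].
exists (col_mx v W); split.
  have HvW : v *m W^T = 0 by rewrite -[v]trmxK -trmx_mul HWv trmx0.
  rewrite -[j.+1]/(1 + j)%N tr_col_mx mul_col_row Hvv HWW HWv HvW.
  by rewrite -scalar_mx_block.
split; first by rewrite -[j.+1]/(1 + j)%N tr_col_mx mul_mx_row HW0v HW0 row_mx0.
by rewrite -[j.+1]/(1 + j)%N col_mx_sub HvU HWU.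
Qed.

Lemma orth_basis n (U : 'M[R]_n) :
  exists (W1 : 'M[R]_(\rank U, n)) (W2 : 'M[R]_(n - \rank U, n)),
    W1 *m W1^T = 1%:M /\ W2 *m W2^T = 1%:M /\ W1 *m W2^T = 0 /\
    (forall g : 'cV[R]_n, (g^T <= U)%MS <-> exists x, g = W1^T *m x).
Proof.
have [W1 [H11 [_ H1U]]] := @ext_orth n n 1 U 0 (\rank U) (eq_leq (congr1 (addn^~ _) (mxrank0 _ _ _))).
have r2 : (\rank W1 + (n - \rank U) <= \rank (1%:M : 'M[R]_n))%N.
  by rewrite (rank_orth H11) mxrank1 subnKC // rank_leq_col.
have [W2 [H22 [H12 _]]] := @ext_orth n n _ 1%:M W1 (n - \rank U) r2.
exists W1, W2; do 3 split => //.
have UW1 : (U <= W1)%MS.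
  by rewrite -(geq_leqif (mxrank_leqif_sup H1U)) (rank_orth H11).
move=> g; split.
  move=> HgU; have /submxP [x Hx] := submx_trans HgU UW1.
  by exists x^T; rewrite -trmx_mul -Hx trmxK.
move=> [x ->]; rewrite trmx_mul trmxK; exact: submx_trans (submxMl _ _) H1U.
Qed.

End Orth.

Section Eigen.
Variable F : fieldType.

Lemma char_poly_trmx n (M : 'M[F]_n) : char_poly M^T = char_poly M.
Proof.
rewrite /char_poly -det_tr; congr (\det _); apply/matrixP => i j.
by rewrite !mxE eq_sym.
Qed.

Lemma root_right_eigen n (M : 'M[F]_n) a : root (char_poly M) a ->
  exists2 u : 'cV[F]_n, u != 0 & M *m u = a *: u.
Proof.
rewrite -char_poly_trmx -eigenvalue_root_char => /eigenvalueP [v Hv vn0].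
exists v^T; first by rewrite trmx_eq0.
by rewrite -[M]trmxK -trmx_mul Hv linearZ.
Qed.

Lemma right_eigen_root n (M : 'M[F]_n) a (u : 'cV[F]_n) :
  u != 0 -> M *m u = a *: u -> root (char_poly M) a.
Proof.
move=> un0 Hu; rewrite -char_poly_trmx -eigenvalue_root_char.
apply/eigenvalueP; exists u^T; last by rewrite trmx_eq0.
by rewrite -trmx_mul Hu linearZ.
Qed.

Lemma left_eigen_root n (M : 'M[F]_n) a (v : 'rV[F]_n) :
  v != 0 -> v *m M = a *: v -> root (char_poly M) a.
Proof.
by move=> vn0 Hv; rewrite -eigenvalue_root_char; apply/eigenvalueP; exists v.
Qed.

Lemma mx_eq0_cols p q (M : 'M[F]_(p, q)) :
  (forall x : 'cV[F]_q, M *m x = 0) -> M = 0.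
Proof.
move=> H; apply/matrixP => i j.
have := congr1 (fun N : 'cV[F]_p => N i 0) (H (delta_mx j 0)).
by rewrite -colE !mxE.
Qed.

End Eigen.

Section OrthP.
Variable R : rcfType.
Variables (d r s : nat).
Variable P : 'M[R]_(d, r + s).
Hypothesis Hrs : (r + s)%N = d.
Hypothesis HP : P^T *m P = 1%:M.

Local Notation P1 := (lsubmx P).
Local Notation P2 := (rsubmx P).

Lemma P_blocks : [/\ P1^T *m P1 = 1%:M, P1^T *m P2 = 0,
                    P2^T *m P1 = 0 & P2^T *m P2 = 1%:M].
Proof.
move: HP; rewrite -{1 2}(hsubmxK P) tr_row_mx mul_col_row (scalar_mx_block r s).
by move/eq_block_mx.
Qed.

Lemma P_free : row_free P.
Proof.
rewrite -row_leq_rank; have := mxrankM_maxl P^T P.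
rewrite HP mxrank1 mxrank_tr => H; rewrite -[X in (X <= _)%N]Hrs; exact: H.
Qed.

Lemma PPt : P *m P^T = 1%:M.
Proof.
apply/eqP; rewrite -subr_eq0 -(mulmx_free_eq0 _ P_free).
by rewrite mulmxBl -mulmxA HP mulmx1 mul1mx subrr.
Qed.

Lemma PPt_split : P1 *m P1^T + P2 *m P2^T = 1%:M.
Proof. by rewrite -PPt -mul_row_col -tr_row_mx hsubmxK. Qed.

Lemma conj_blocks (A : 'M[R]_d) :
  P^T *m A *m P = block_mx (P1^T *m A *m P1) (P1^T *m A *m P2)
                           (P2^T *m A *m P1) (P2^T *m A *m P2).
Proof.
by rewrite -{1 2}(hsubmxK P) tr_row_mx mul_col_mx mul_col_row.
Qed.

End OrthP.

Section Gersh.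
Variable R : rcfType.
Variable d : nat.
Variable A : 'M[R]_d.
Hypothesis rateA : rate_matrix A.

Local Notation normc := (@Normc.normc R).

Lemma normc_def (w : R[i]) : normc w = Num.sqrt (complex.Re w ^+ 2 + complex.Im w ^+ 2).
Proof. by case: w. Qed.

Lemma normc_ge0 (w : R[i]) : 0 <= normc w.
Proof. by rewrite normc_def sqrtr_ge0. Qed.

Lemma normc_real (a : R) : normc (a%:C)%C = `|a|.
Proof. by rewrite normc_def /= expr0n /= addr0 sqrtr_sqr. Qed.

Lemma normc_sum (I : finType) (P : pred I) (F : I -> R[i]) :
  normc (\sum_(i | P i) F i) <= \sum_(i | P i) normc (F i).
Proof.
apply: (big_ind2 (fun x y => normc x <= y)).
- by rewrite Normc.normc0.
- by move=> x1 x2 y1 y2 h1 h2; apply: le_trans (le_normcD _ _) (lerD h1 h2).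
- by [].
Qed.

Lemma gersh (z : R[i]) (u : 'cV[R[i]]_d) :
  u != 0 -> map_mx (real_complex R) A *m u = z *: u -> 0 <= complex.Re z -> z = 0.
Proof.
move=> un0 Hu Hre.
have [i0 Hi0] : exists i0, u i0 0 != 0.
  case: (pickP (fun i => u i 0 != 0)) => [i0 Hi0|H]; first by exists i0.
  move/eqP: un0; case; apply/matrixP => i j; rewrite (ord1 j) mxE.
  by have := H i => /negbFE/eqP.
pose nu i := normc (u i 0).
pose im := [arg max_(i > i0) nu i]%O.
have Hmax : forall j, nu j <= nu im.
  by rewrite /im; case: arg_maxP => // i _ H j; apply: H.
have nu_pos : 0 < nu im.
  apply: lt_le_trans (Hmax i0); rewrite lt_def normc_ge0 andbT.
  by apply/eqP => /Normc.eq0_normc /eqP; apply/negP.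
move: nu_pos Hmax; set i := im => nu_pos Hmax.
pose a := A i i.
have Hrow := congr1 (fun N : 'cV[R[i]]_d => N i 0) Hu.
move: Hrow; rewrite /= !mxE (bigD1 i) //= mxE => Hrow.
have Heq : (z - (a%:C)%C) * u i 0 = \sum_(j | j != i) ((A i j)%:C)%C * u j 0.
  by rewrite mulrBl -Hrow /a addrAC subrr add0r; apply: eq_bigr => j _; rewrite mxE.
have Hs : \sum_(j | j != i) A i j = - a.
  have := (proj2 rateA) i; rewrite (bigD1 i) //= => /eqP.
  by rewrite addrC addr_eq0 => /eqP.
have Hn : normc (z - (a%:C)%C) * nu i <= - a * nu i.
  rewrite -Normc.normcM Heq; apply: le_trans (normc_sum _ _) _.
  rewrite -Hs mulr_suml; apply: ler_sum => j nji.
  rewrite Normc.normcM normc_real ger0_norm; last first.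
    by apply: (proj1 rateA); rewrite eq_sym.
  by apply: ler_wpM2l; [apply: (proj1 rateA); rewrite eq_sym | apply: Hmax].
have Hle : normc (z - (a%:C)%C) <= - a by rewrite -(ler_pM2r nu_pos).
have Hna : 0 <= - a by apply: le_trans Hle; exact: normc_ge0.
move: Hle Hre Hna; rewrite normc_def; clear Hu Heq Hn Hrow; case: z => x y /= Hle Hre Hna.
set sq := Num.sqrt _ in Hle.
have sq0 : 0 <= sq by rewrite sqrtr_ge0.
have sq2 : sq ^+ 2 = (x + - a) ^+ 2 + (y + - 0) ^+ 2.
  by rewrite sqr_sqrtr // addr_ge0 // sqr_ge0.
have x0 : x = 0 by nra.
have y0 : y = 0 by rewrite x0 in sq2; nra.
by rewrite x0 y0.
Qed.
End Gersh.
Lemma ReE (R : rcfType) (z : R[i]) : Num.Theory.Re z = (complex.Re z)%:C%C.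
Proof. by rewrite complexRe. Qed.

Section Index.
Variable R : rcfType.
Variable d' : nat.
Variable A : 'M[R]_d'.+1.
Variable h : 'cV[R]_d'.+1.
Hypothesis S0C : forall y, A *m y = 0 -> inC A h y.
Hypothesis idx : forall x : 'cV[R]_d'.+1, A *m (A *m x) = 0 -> A *m x = 0.

Lemma inC_horner p g : inC A h g -> inC A h (horner_mx A p *m g).
Proof.
elim/poly_ind: p g => [|p c IH] g Hg.
  by rewrite rmorph0 mul0mx; exact: inC_0.
rewrite rmorphD rmorphM /= horner_mx_X horner_mx_C mulmxDl -mulmxE -mulmxA.
apply: inC_add; first by apply: IH; apply: inC_A.
by rewrite mul_scalar_mx; apply: inC_scale.
Qed.

Lemma pow_ker k (x : 'cV[R]_d'.+1) : A ^+ k.+1 *m x = 0 -> A *m x = 0.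
Proof.
elim: k x => [|k IH] x; first by rewrite expr1.
by rewrite exprSr -mulmxE -mulmxA => /IH; exact: idx.
Qed.

Lemma index_C y : inC A h (A *m y) -> inC A h y.
Proof.
move=> HAy.
case: (multiplicity_XsubC (char_poly A) 0) => k [q Hq Hp].
have pn0 : char_poly A != 0 by apply: monic_neq0; exact: char_poly_monic.
rewrite pn0 /= in Hq; rewrite polyC0 subr0 in Hp.
have CH := Cayley_Hamilton A.
rewrite Hp mulrC rmorphM rmorphXn /= horner_mx_X in CH.
have HqA : forall x : 'cV[R]_d'.+1, A *m (horner_mx A q *m x) = 0.
  move=> x; case: k Hp CH => [|k] Hp CH.
    by move: CH; rewrite expr0 mul1r => ->; rewrite mul0mx mulmx0.
  by apply: (pow_ker (k:=k)); rewrite mulmxA mulmxE CH mul0mx.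
pose c := q.[0].
have cn0 : c != 0 by [].
have Hf : root (c%:P - q) 0 by rewrite /root hornerD hornerN hornerC subrr.
case/factor_theorem: Hf => r0 Hr.
have HcM : c%:M - horner_mx A q = horner_mx A r0 * A.
  by rewrite -(horner_mx_C A) -rmorphB Hr polyC0 subr0 rmorphM /= horner_mx_X.
have Hy : y = c^-1 *: (horner_mx A q *m y + horner_mx A r0 *m (A *m y)).
  rewrite mulmxA -[horner_mx A r0 *m A]/(horner_mx A r0 * A) -HcM.
  rewrite mulmxBl mul_scalar_mx addrC subrK scalerA mulVf // scale1r //.
rewrite Hy; apply: inC_scale; apply: inC_add.
  by apply: S0C; apply: HqA.
exact: inC_horner.
Qed.

End Index.

Section HurwitzP.
Variable R : rcfType.
Variables (d r s : nat).
Variable A : 'M[R]_d.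
Variable h : 'cV[R]_d.
Hypothesis rateA : rate_matrix A.
Variable P : 'M[R]_(d, r + s).
Hypothesis Hrs : (r + s)%N = d.
Hypothesis HP : P^T *m P = 1%:M.
Local Notation P1 := (lsubmx P).
Local Notation P2 := (rsubmx P).
Hypothesis HC : forall g : 'cV[R]_d, inC A h g <-> exists x, g = P1 *m x.

Local Notation fC := (real_complex R).

Lemma DL : P2^T *m A *m P1 = 0.
Proof.
have [_ _ H21 _] := P_blocks HP.
apply: mx_eq0_cols => x.
have /HC [x' Hx'] : inC A h (A *m (P1 *m x)).
  by apply: inC_A; apply/HC; exists x.
by rewrite -!mulmxA Hx' mulmxA H21 mul0mx.
Qed.

Lemma DR : drsubmx (P^T *m A *m P) = P2^T *m A *m P2.
Proof. by rewrite conj_blocks block_mxKdr. Qed.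

Lemma hurwitz_of : (forall y, inC A h (A *m y) -> inC A h y) ->
  hurwitz (drsubmx (P^T *m A *m P)).
Proof.
move=> idxC z Hz.
have [H11 H12 H21 H22] := P_blocks HP.
rewrite -complexRe ltcE /= eqxx /=.
rewrite DR in Hz.
have [Hlt|Hge] := ltP (complex.Re z) 0; first by [].
exfalso.
have Hz0 : z = 0.
  move: Hz; rewrite map_char_poly -eigenvalue_root_char => /eigenvalueP [v Hv vn0].
  pose w := row_mx (0 : 'rV[R[i]]_r) v.
  have Hw : w *m map_mx fC (P^T *m A *m P) = z *: w.
    rewrite conj_blocks DL map_block_mx map_mx0 mul_row_block.
    by rewrite !mul0mx mulmx0 !add0r Hv scale_row_mx scaler0.
  have wn0 : w != 0.
    apply: contraNneq vn0 => w0; by rewrite -(row_mxKr (0 : 'rV[R[i]]_r) v) -/w w0 linear0.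
  pose u := w *m map_mx fC P^T.
  have E2 : map_mx fC P^T *m map_mx fC A =
            map_mx fC (P^T *m A *m P) *m map_mx fC P^T.
    rewrite -!map_mxM; congr (map_mx fC); rewrite -!mulmxA.
    by rewrite (PPt Hrs HP) mulmx1.
  have Hu : u *m map_mx fC A = z *: u.
    by rewrite /u -mulmxA E2 mulmxA Hw -scalemxAl.
  have un0 : u != 0.
    apply: contraNneq wn0 => u0; have := congr1 (mulmx ^~ (map_mx fC P)) u0.
    rewrite /= mul0mx /u -mulmxA -map_mxM HP map_mx1 mulmx1. by move=> ->.
  have [u' u'n0 Hu'] := root_right_eigen (left_eigen_root un0 Hu).
  exact: (gersh rateA u'n0 Hu').
move: Hz; rewrite Hz0 -(rmorph0 fC) fmorph_root => /root_right_eigen [b bn0].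
rewrite scale0r => Hb.
pose y := P2 *m b.
have HAy : inC A h (A *m y).
  apply/HC; exists (P1^T *m A *m y).
  rewrite -[LHS]mul1mx -(PPt_split Hrs HP) mulmxDl -!mulmxA.
  by rewrite [P2^T *m _]mulmxA [P2^T *m _ *m _]mulmxA mulmxA Hb mulmx0 addr0.
have /HC [x Hx] := idxC _ HAy.
move/eqP: bn0; apply.
by rewrite -[b]mul1mx -H22 -mulmxA -/y Hx mulmxA H21 mul0mx.
Qed.

Lemma S0C_of_hurwitz : hurwitz (drsubmx (P^T *m A *m P)) ->
  forall y, A *m y = 0 -> inC A h y.
Proof.
move=> Hh y Ay0.
have [/inCP //|Hn] := boolP (inV (Cmx A h) y).
exfalso.
have [H11 H12 H21 H22] := P_blocks HP.
pose b := P2^T *m y.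
have Hy : y = P1 *m (P1^T *m y) + P2 *m b.
  by rewrite !mulmxA -mulmxDl (PPt_split Hrs HP) mul1mx.
have bn0 : b != 0.
  apply/negP => /eqP b0; move/negP: Hn; apply; apply/inCP/HC.
  by exists (P1^T *m y); rewrite {1}Hy b0 mulmx0 addr0.
have Db : drsubmx (P^T *m A *m P) *m b = 0.
  rewrite DR -mulmxA.
  have -> : P2 *m b = y - P1 *m (P1^T *m y) by apply/eqP; rewrite eq_sym subr_eq addrC -Hy.
  by rewrite mulmxBr [P2^T *m A *m (P1 *m _)]mulmxA DL mul0mx subr0 -mulmxA Ay0 mulmx0.
have Hr : root (map_poly fC (char_poly (drsubmx (P^T *m A *m P)))) (fC 0).
  rewrite fmorph_root; apply: (right_eigen_root bn0).
  by rewrite Db scale0r.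
have := Hh (fC 0) Hr.
by rewrite -complexRe /= ltxx.
Qed.

End HurwitzP.

Unset Implicit Arguments. Set Strict Implicit.

Theorem proposition2 (R : rcfType) (d : nat) (A : 'M[R]_d) (h : 'cV[R]_d)
    (m : nat) (S : 'I_m -> {set 'I_d}) :
  rate_matrix A ->
  ergodic_partition A S ->
  (stabilizable A h <-> (forall y : 'cV[R]_d, A *m y = 0 -> inC A h y)) /\
  (m = 1%N -> stabilizable A h) /\
  (stabilizable A h <-> (forall k : 'I_m, inC A h (indic R (S k)))).
Proof.
move=> rateA ergS.
have iiff : (forall y : 'cV[R]_d, A *m y = 0 -> inC A h y) <->
            (forall k : 'I_m, inC A h (indic R (S k))).
  split; first by move=> H k; apply: H; exact: indic_ker.
  move=> H y Hy; rewrite (restr_sum ergS y); apply: inC_sum => k _.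
  have [c ->] := restr_indic rateA ergS k Hy.
  by apply: inC_scale; exact: H.
have main : stabilizable A h <-> (forall y : 'cV[R]_d, A *m y = 0 -> inC A h y).
  split.
    case => [allC y _ | [_ [r [s [P [Hrs [HP [HC Hh]]]]]]]]; first exact: allC.
    by move=> y Hy; apply: (S0C_of_hurwitz Hrs HP HC Hh Hy).
  move=> S0C.
  case: (classic (forall g : 'cV[R]_d, inC A h g)) => [allC|nall]; first by left.
  right; split => //.
  case: d A h S rateA ergS iiff S0C nall => [|d'] A h S rateA ergS iiff S0C nall.
    exfalso; apply: nall => g.
    have -> : g = 0 by apply/matrixP => -[] //.
    exact: inC_0.
  have idxC : forall y, inC A h (A *m y) -> inC A h y.
    move=> y; apply: (index_C S0C) => x; exact: (index1 rateA ergS).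
  have [W1 [W2 [H11 [H22 [H12 HU]]]]] := orth_basis (Cmx A h).
  exists (\rank (Cmx A h)), (d'.+1 - \rank (Cmx A h))%N, (col_mx W1 W2)^T.
  have Hrs : (\rank (Cmx A h) + (d'.+1 - \rank (Cmx A h)))%N = d'.+1.
    by rewrite subnKC // rank_leq_col.
  have H21 : W2 *m W1^T = 0 by rewrite -[W2]trmxK -trmx_mul H12 trmx0.
  have HP : ((col_mx W1 W2)^T)^T *m (col_mx W1 W2)^T = 1%:M.
    by rewrite trmxK tr_col_mx mul_col_row H11 H22 H12 H21 -scalar_mx_block.
  have HC : forall g, inC A h g <-> exists x, g = lsubmx (col_mx W1 W2)^T *m x.
    by move=> g; rewrite tr_col_mx row_mxKl inCP; exact: HU.
  do 3 split => //.
  exact: (hurwitz_of rateA Hrs HP HC idxC).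
split => //; split; last by rewrite main.
move=> m1; apply/main/iiff => k.
have -> : indic R (S k) = ones R d.
  apply/matrixP => i j; rewrite !mxE.
  have [k' Hk'] := class_of ergS i.
  have -> : k = k' by subst m; rewrite (ord1 k) (ord1 k').
  by rewrite Hk'.
exact: inC_ones.
Qed.
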